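(* Let $I=\langle N,M,V\rangle$ be an ordered instance of goods. If there is a good $g\in M$ such that at most one agent in $N$ does not have an MMS partition in which the bundle containing $g$ has cardinality two, then there exist an agent $i\in N$ and a good $g'\in M\setminus\{g\}$ such that allocating $\{g,g'\}$ to $i$ is a valid reduction.
   Context: An instance $I=\langle N,M,V\rangle$ has agents $N=\{1,\dots,n\}$, goods $M=\{1,\dots,m\}$ and additive valuations $v_i$ with $v_i(\emptyset)=0$, $v_i(S)=\sum_{g\in S}v_i(\{g\})$, $v_{ij}:=v_i(\{j\})\ge 0$. It is ordered if $v_{ij}\ge v_{i(j+1)}$ for all $i$ and $1\le j<m$. An allocation ($n$-partition) is an ordered $n$-tuple of pairwise disjoint, possibly empty subsets of $M$ with union $M$. The maximin share of $i$ in $I$ is $\mu_i^I=\max_A\min_j v_i(A_j)$ over all allocations; an MMS partition of $i$ is an allocation $A$ with $v_i(A_j)\ge\mu_i^I$ for all $j$. Removing agents $N'\subseteq N$ and items $M'\subseteq M$ is a valid reduction if the items of $M'$ can be allocated to the agents of $N'$ so that each $i'\in N'$ receives a bundle $B_{i'}$ with $v_{i'}(B_{i'})\ge\mu_{i'}^I$, and every $i\in N\setminus N'$ satisfies $\mu_i^{I'}\ge\mu_i^I$, where $I'=\langle N\setminus N', M\setminus M', V\rangle$ (valuations restricted, maximin share computed with $|N\setminus N'|$ bundles). ''Allocating $B$ to $i$ is a valid reduction'' means this holds with $N'=\{i\}$, $M'=B$. *)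

(* Defs.v *)
From mathcomp Require Import all_boot all_order all_algebra.
Set Implicit Arguments. Unset Strict Implicit. Unset Printing Implicit Defensive.
Import Order.TTheory GRing.Theory Num.Theory.
Local Open Scope ring_scope.

(* An instance with n agents ('I_n) and m goods ('I_m); additive valuations
   are given by the item values v i j = v_{ij} (for a subset S of goods,
   v_i(S) = \sum_(j in S) v i j). *)

Section Defs.
Variable R : realFieldType.

Definition val {m} (vi : 'I_m -> R) (S : {set 'I_m}) : R := \sum_(j in S) vi j.

(* bundle j of the allocation of the goods of S encoded by f
   (f assigns each good its bundle index) *)
Definition bundle {m k} (S : {set 'I_m}) (f : {ffun 'I_m -> 'I_k}) (j : 'I_k)
  : {set 'I_m} := [set g in S | f g == j].

Definition minbundle {m k} (vi : 'I_m -> R) (S : {set 'I_m})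
  (f : {ffun 'I_m -> 'I_k.+1}) : R :=
  \big[Num.min/val vi (bundle S f ord0)]_(j < k.+1) val vi (bundle S f j).

(* maximin share of an agent with valuation vi, on goods S, with k bundles:
   max over all k-partitions of S of the min bundle value.
   (k = 0 never matters; it is set to 0.) *)
Definition mms {m} (vi : 'I_m -> R) (S : {set 'I_m}) (k : nat) : R :=
  match k with
  | 0 => 0
  | k'.+1 => \big[Num.max/minbundle vi S ([ffun=> ord0] : {ffun 'I_m -> 'I_k'.+1})]_(f : {ffun 'I_m -> 'I_k'.+1})
               minbundle vi S f
  end.

Definition ordered_instance {n m} (v : 'I_n -> 'I_m -> R) : Prop :=
  (forall i j, 0 <= v i j) /\
  (forall i (j1 j2 : 'I_m), (j1 <= j2)%N -> v i j2 <= v i j1).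

Definition mms_partition {n m} (v : 'I_n -> 'I_m -> R) (i : 'I_n)
  (f : {ffun 'I_m -> 'I_n}) : Prop :=
  forall j, mms (v i) setT n <= val (v i) (bundle setT f j).

Definition valid_reduction {n m} (v : 'I_n -> 'I_m -> R)
  (N' : {set 'I_n}) (M' : {set 'I_m}) : Prop :=
  (exists h : {ffun 'I_m -> 'I_n},
      (forall g, g \in M' -> h g \in N') /\
      (forall i, i \in N' -> mms (v i) setT n <= val (v i) (bundle M' h i))) /\
  (forall i, i \notin N' -> mms (v i) setT n <= mms (v i) (~: M') (n - #|N'|)).

End Defs.

(* Main.v *)
Require Import Defs.
From mathcomp Require Import all_boot all_order all_algebra.
From mathcomp Require Import lra.
Set Implicit Arguments. Unset Strict Implicit. Unset Printing Implicit Defensive.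
Import Order.TTheory GRing.Theory Num.Theory.
Local Open Scope ring_scope.

Local Notation val := Defs.val.
Section Aux.
Variables (R : realFieldType) (m : nat).
Implicit Types (vi : 'I_m -> R) (A B S : {set 'I_m}).

Lemma val_sub vi A B : (forall j, 0 <= vi j) -> A \subset B -> val vi A <= val vi B.
Proof.
move=> h0 sAB; rewrite /Defs.val (big_setID A (A:=B)) /= (setIidPr sAB) lerDl.
by apply: sumr_ge0.
Qed.

Lemma val_set2 vi g h : g != h -> val vi [set g; h] = vi g + vi h.
Proof.
move=> ne; rewrite /Defs.val (big_setD1 g) ?in_set2 ?eqxx //; congr (_ + _).
have -> : [set g; h] :\ g = [set h].
  apply/setP=> x; rewrite !inE; case: eqP => // ->.
  by rewrite (negbTE ne).
by rewrite big_set1.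
Qed.

Lemma mms_ge vi S k (f : {ffun 'I_m -> 'I_k.+1}) c :
  (forall j, c <= val vi (bundle S f j)) -> c <= mms vi S k.+1.
Proof.
move=> hc; rewrite /mms; apply: (bigmax_sup f) => //.
by rewrite /minbundle; apply: le_bigmin.
Qed.

Lemma mms_att vi S k : exists f : {ffun 'I_m -> 'I_k.+1},
  forall j, mms vi S k.+1 <= val vi (bundle S f j).
Proof.
have [f ->] : exists f : {ffun 'I_m -> 'I_k.+1}, mms vi S k.+1 = minbundle vi S f.
  rewrite /mms; apply: (big_ind (fun y => exists f, y = minbundle vi S f)).
  - by exists [ffun=> ord0].
  - move=> x y [f1 ->] [f2 ->]; case: (leP (minbundle vi S f1) (minbundle vi S f2)).
    + by exists f2.
    + by exists f1.
  - by move=> f _; exists f.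
by exists f => j; rewrite /minbundle; apply: bigmin_le.
Qed.

Lemma merge vi k (f : {ffun 'I_m -> 'I_k.+2}) mu g h :
  (forall j, 0 <= vi j) ->
  (forall j, mu <= val vi (bundle setT f j)) -> g != h ->
  vi g + vi h <= val vi (bundle setT f (f g)) ->
  mu <= mms vi (~: [set g; h]) k.+1.
Proof.
move=> h0 hmu ngh hv.
set b := f g.
set c : 'I_k.+2 := if f h != b then f h else lift b ord0.
have ncb : c != b.
  rewrite /c; case: ifP => // _; by rewrite eq_sym neq_lift.
set c' : 'I_k.+1 := odflt ord0 (unlift b c).
have Ec : lift b c' = c.
  rewrite /c'; case: (unliftP b c) => [j Ej|Ej] /=; [by rewrite Ej | by rewrite Ej eqxx in ncb].
pose f' : {ffun 'I_m -> 'I_k.+1} := [ffun x => odflt c' (unlift b (f x))].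
apply: (@mms_ge vi _ k f') => j'.
have hfc : f h = c \/ f h = b.
  rewrite /c; case: ifP => [_|/negbFE/eqP ->]; [by left | by right].
have f'E x : f x != b -> lift b (f' x) = f x.
  move=> nb; rewrite /f' ffunE; case: (unliftP b (f x)) => [j Ej|Ej] /=.
    by rewrite Ej.
  by rewrite Ej eqxx in nb.
have f'b x : f x = b -> f' x = c'.
  by move=> Eb; rewrite /f' ffunE Eb; case: (unliftP b b) => [j Ej|//]; move: (neq_lift b j); rewrite -Ej eqxx.
case: (eqVneq j' c') => [->|njc0].
- set bc := bundle setT f c; set bb := bundle setT f b.
  set X := bc :|: bb.
  have gX : g \in X by rewrite !inE /b eqxx orbT.
  have hX : h \in X :\ g.
    rewrite !inE eq_sym ngh /=; case: hfc => ->; by rewrite eqxx ?orbT.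
  have sub : (X :\ g) :\ h \subset bundle (~: [set g; h]) f' c'.
    apply/subsetP => x; rewrite /bc /bb /bundle !inE /= => /and3P [nxh nxg /orP [/eqP Hc|/eqP Hb]].
      rewrite (negbTE nxh) (negbTE nxg) /=; apply/eqP; apply: (@lift_inj _ b); rewrite Ec -Hc f'E //.
      by rewrite Hc.
    by rewrite (negbTE nxh) (negbTE nxg) /= f'b.
  apply: le_trans (val_sub h0 sub).
  have disj : [disjoint bc & bb].
    apply/pred0P => x /=; rewrite !inE; case: (eqVneq (f x) c) => //= ->.
    by rewrite (negbTE ncb).
  have EX : val vi X = val vi bc + val vi bb.
    rewrite /Defs.val -bigU //; apply: eq_bigl => x; by rewrite !inE.
  have := hmu c; move: hv; rewrite -/b -/bb => hv hc.
  have : val vi X = vi g + (vi h + val vi ((X :\ g) :\ h)).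
    by rewrite /Defs.val (big_setD1 g gX) (big_setD1 h hX).
  rewrite EX => E.
  lra.
- set j := lift b j'.
  have njb : j != b by rewrite eq_sym neq_lift.
  have njc : j != c by rewrite -Ec /j (inj_eq (@lift_inj _ b)).
  apply: le_trans (hmu j) _; apply: val_sub h0 _.
  apply/subsetP => x; rewrite /bundle !inE /= => /eqP Hx.
  have nxg : x != g by apply/eqP => E; move: njb; rewrite -Hx E eqxx.
  have nxh : x != h.
    apply/eqP => E; case: hfc; rewrite -E Hx => E'; [by rewrite E' eqxx in njc|by rewrite E' eqxx in njb].
  rewrite (negbTE nxh) (negbTE nxg) /=; apply/eqP; apply: (@lift_inj _ b).
  by rewrite f'E // Hx.
Qed.

Lemma reduce n (v : 'I_n.+2 -> 'I_m -> R) (h0 : forall i j, 0 <= v i j) g i h :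
  h != g -> mms (v i) setT n.+2 <= val (v i) [set g; h] ->
  (forall j, j != i -> exists f : {ffun 'I_m -> 'I_n.+2},
     (forall b, mms (v j) setT n.+2 <= val (v j) (bundle setT f b)) /\
     v j g + v j h <= val (v j) (bundle setT f (f g))) ->
  valid_reduction v [set i] [set g; h].
Proof.
move=> nhg hi H; split.
- exists [ffun=> i]; split.
  + by move=> x _; rewrite ffunE inE.
  + move=> j; rewrite inE => /eqP ->.
    have -> : bundle [set g; h] [ffun=> i] i = [set g; h].
      by apply/setP => x; rewrite !inE ffunE eqxx andbT.
    exact: hi.
- move=> j; rewrite inE => nji; rewrite cards1 subn1 /=.
  have [f [Hf Hv]] := H j nji.
  apply: (merge (f := f)) => //; by rewrite eq_sym.
Qed.
End Aux.

Theorem lemma22 (R : realFieldType) (n m : nat) (v : 'I_n -> 'I_m -> R)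
  (Hn : (2 <= n)%N) (Hord : ordered_instance v) (g : 'I_m) :
  (forall i1 i2 : 'I_n,
      ~ (exists f, mms_partition v i1 f /\ #|bundle setT f (f g)| = 2%N) ->
      ~ (exists f, mms_partition v i2 f /\ #|bundle setT f (f g)| = 2%N) ->
      i1 = i2) ->
  exists (i : 'I_n) (g' : 'I_m), g' != g /\ valid_reduction v [set i] [set g; g'].
Proof.
move: Hn v Hord; case: n => [|[|n]] // Hn v [h0 hord] H.
pose P (i : 'I_n.+2) (h : 'I_m) :=
  [exists f : {ffun 'I_m -> 'I_n.+2},
     [forall b, mms (v i) setT n.+2 <= val (v i) (bundle setT f b)]
     && (bundle setT f (f g) == [set g; h])] && (h != g).
have PE i : (exists f, mms_partition v i f /\ #|bundle setT f (f g)| = 2%N)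
            <-> exists h, P i h.
  split.
  - case=> f [Hf Hc].
    have /cards2P [x [y [nxy E]]] : #|bundle setT f (f g)| == 2%N by rewrite Hc.
    have : g \in bundle setT f (f g) by rewrite !inE eqxx.
    rewrite E in_set2 => /orP [/eqP gx | /eqP gy].
    + exists y; apply/andP; split; last by rewrite gx eq_sym.
      apply/existsP; exists f; apply/andP; split.
        by apply/forallP => b; exact: Hf.
      by rewrite E gx.
    + exists x; apply/andP; split; last by rewrite gy.
      apply/existsP; exists f; apply/andP; split.
        by apply/forallP => b; exact: Hf.
      by rewrite E gy setUC.
  - case=> h /andP [/existsP [f /andP [/forallP Hf /eqP E]] nhg].
    exists f; split; first exact: Hf.
    by rewrite E cards2 eq_sym nhg.
have notP i : ~~ [exists h, P i h] ->
    ~ (exists f, mms_partition v i f /\ #|bundle setT f (f g)| = 2%N).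
  move=> /existsPn N; rewrite PE => [[h Hh]]; by move: (N h); rewrite Hh.
have exP : exists p : 'I_n.+2 * 'I_m, P p.1 p.2.
  case: (boolP [exists h, P ord0 h]) => [/existsP [h Hh]|N0]; first by exists (ord0, h).
  case: (boolP [exists h, P ord_max h]) => [/existsP [h Hh]|N1]; first by exists (ord_max, h).
  by have /(congr1 (@nat_of_ord _)) := H ord0 ord_max (notP _ N0) (notP _ N1).
have [p0 Hp0] := exP.
case: (@arg_maxnP _ p0 (fun p => P p.1 p.2) (fun p => nat_of_ord p.2) Hp0).
move=> [i0 hs] /= Ps Hmax.
have nhsg : hs != g by case/andP: Ps.
have ngh : g != hs by rewrite eq_sym.
have hgood j h : P j h -> exists f : {ffun 'I_m -> 'I_n.+2},
     (forall b, mms (v j) setT n.+2 <= val (v j) (bundle setT f b)) /\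
     v j g + v j hs <= val (v j) (bundle setT f (f g)).
  move=> Pjh; have := Hmax (j, h) Pjh => /= hle.
  case/andP: Pjh => /existsP [f /andP [/forallP Hf /eqP E]] nhg.
  exists f; split => //; rewrite E val_set2 1?eq_sym //.
  by rewrite lerD2l; apply: hord.
case: (boolP [exists k, ~~ [exists h, P k h] && (mms (v k) setT n.+2 <= v k g + v k hs)]).
- case/existsP => k /andP [Nk Hk].
  exists k, hs; split => //; apply: reduce => //.
    by rewrite val_set2.
  move=> j njk; case: (boolP [exists h, P j h]) => [/existsP [h Hh]|Nj].
    exact: hgood Hh.
  by move: njk; rewrite (H j k (notP _ Nj) (notP _ Nk)) eqxx.
- move=> /existsPn Nall.
  exists i0, hs; split => //; apply: reduce => //.
    case/andP: Ps => /existsP [f /andP [/forallP Hf /eqP E]] _.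
    by rewrite -E.
  move=> j _; case: (boolP [exists h, P j h]) => [/existsP [h Hh]|Nj].
    exact: hgood Hh.
  have := Nall j; rewrite Nj /= -ltNge => lt.
  have [f Hf] := mms_att (v j) setT n.+1.
  exists f; split => //.
  by apply: ltW; apply: lt_le_trans lt (Hf (f g)).
Qed.
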